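(* Let $R$ be an integral domain with $R\neq K_R$. Assume there is a non-trivial real-valued additive valuation $\nu$ of $K_R$ with $\nu(r)\ge0$ for all $r\in R$. Then $K_R$, as an $R$-algebra, is not strongly simple.
   Context: $K_R$ is the field of fractions of $R$. An $R$-submodule $M$ of an $R$-algebra $\mathcal A$ is a (two-sided) Mathieu subspace if whenever $a\in\mathcal A$ satisfies $a^m\in M$ for all $m\ge1$, then for all $b,c\in\mathcal A$ there is $N$ with $ba^mc\in M$ for all $m\ge N$. $\mathcal A$ is strongly simple if its only Mathieu subspaces are $0$ and $\mathcal A$. A non-trivial real-valued additive valuation is a map $\nu:K_R^\times\to\mathbb R$ (extended by $\nu(0)=\infty$) with $\nu(xy)=\nu(x)+\nu(y)$, $\nu(x+y)\ge\min(\nu(x),\nu(y))$, not identically zero on $K_R^\times$. *)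

(* Defs.v *)
From Stdlib Require Import Reals.
From HB Require Import structures.
From mathcomp Require Import all_boot all_order all_algebra.
Set Implicit Arguments. Unset Strict Implicit. Unset Printing Implicit Defensive.
Import GRing.Theory.
Local Open Scope ring_scope.

(* An A-algebra structure over a commutative ring D given by a ring map
   f : D -> A (scalar action r . a := f r * a). *)

Definition is_submodule (D : comNzRingType) (A : nzRingType) (f : D -> A)
  (M : A -> Prop) : Prop :=
  [/\ M 0,
      (forall x y, M x -> M y -> M (x + y)) &
      (forall (r : D) x, M x -> M (f r * x))].

Definition is_Mathieu_subspace (D : comNzRingType) (A : nzRingType) (f : D -> A)
  (M : A -> Prop) : Prop :=
  is_submodule f M /\
  forall a : A, (forall m : nat, (1 <= m)%N -> M (a ^+ m)) ->
    forall b c : A, exists N : nat, forall m : nat, (N <= m)%N -> M (b * a ^+ m * c).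

Definition strongly_simple (D : comNzRingType) (A : nzRingType) (f : D -> A) : Prop :=
  forall M : A -> Prop, is_Mathieu_subspace f M ->
    (forall x, M x <-> x = 0) \/ (forall x, M x).

(* non-trivial real-valued additive valuation on the nonzero elements of a field K
   (extended by nu(0) = +infinity, so only values at nonzero elements matter) *)
Definition is_nontriv_real_valuation (K : fieldType) (nu : K -> R) : Prop :=
  [/\ (forall x y : K, x != 0 -> y != 0 -> nu (x * y) = Rplus (nu x) (nu y)),
      (forall x y : K, x != 0 -> y != 0 -> (x + y) != 0 ->
          Rle (Rmin (nu x) (nu y)) (nu (x + y))) &
      (exists x : K, x != 0 /\ nu x <> R0)].

(* Main.v *)
Require Import Defs.
From Stdlib Require Import Reals Lra.
From HB Require Import structures.
From mathcomp Require Import all_boot all_order all_algebra.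
Local Open Scope ring_scope.

Theorem lemma6p6 (D : idomainType)
  (HDK : ~ (forall x : {fraction D}, exists r : D, x = FracField.tofrac r))
  (nu : {fraction D} -> R)
  (Hnu : is_nontriv_real_valuation nu)
  (HnuD : forall r : D, r != 0 -> Rle R0 (nu (FracField.tofrac r))) :
  ~ strongly_simple (@FracField.tofrac D).
Proof.
case: Hnu => Hmul Hadd [x0 [Hx0 Hnx0]].
have nu1 : nu 1 = R0.
  have := Hmul 1 1 (GRing.oner_neq0 : (1 : {fraction D}) != 0) (GRing.oner_neq0 : (1 : {fraction D}) != 0). rewrite GRing.mulr1 => E; idtac.
have E2 : nu 1 = nu 1 by []. move: E2 E. set t := nu 1. move=> _ E. lra.
have nuX : forall a : {fraction D}, a != 0 -> forall m, nu (a ^+ m) = Rmult (INR m) (nu a).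
  move=> a Ha; elim=> [|m IH]; first by rewrite GRing.expr0 nu1 /=; lra.
  rewrite GRing.exprS Hmul // ?GRing.expf_neq0 // IH S_INR; lra.
move=> Hss.
have := Hss (fun x => x = 0 \/ Rlt R0 (nu x)).
case.
- split; first split.
  + by left.
  + move=> x y [->|Hx] [->|Hy]; rewrite ?GRing.add0r ?GRing.addr0; auto.
    have [E|E] := eqVneq (x + y) 0; first by left.
    right.
    have [Ex|Ex] := eqVneq x 0; first by rewrite Ex in Hx; rewrite Ex GRing.add0r.
    have [Ey|Ey] := eqVneq y 0; first by rewrite Ey in Hy; rewrite Ey GRing.addr0.
    have H := Hadd x y Ex Ey E. apply: Rlt_le_trans H.
    by apply: Rmin_glb_lt.
  + move=> r x [->|Hx]; first by left; rewrite GRing.mulr0.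
    have [->|Hr] := eqVneq r 0; first by left; rewrite tofrac0 GRing.mul0r.
    have [Ex|Ex] := eqVneq x 0; first by left; rewrite Ex GRing.mulr0.
    have Hr' : FracField.tofrac r != 0 by rewrite tofrac_eq0.
    right; rewrite Hmul //. have := HnuD r Hr. lra.
  + move=> a Ha b c.
    have [Ea|Ea] := eqVneq a 0.
      exists 1%N => m Hm. left. rewrite Ea GRing.expr0n.
      by case: m Hm => // m _; rewrite /= GRing.mulr0 GRing.mul0r.
    have Hpa : Rlt R0 (nu a).
      case: (Ha 1%N isT); rewrite GRing.expr1 => // E; by rewrite E eqxx in Ea.
    have [Eb|Eb] := eqVneq b 0.
      by exists 0%N => m _; left; rewrite Eb !GRing.mul0r.
    have [Ec|Ec] := eqVneq c 0.
      by exists 0%N => m _; left; rewrite Ec GRing.mulr0.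
    have [n Hn] := INR_unbounded (Rdiv (Ropp (Rplus (nu b) (nu c))) (nu a)).
    exists n => m Hnm. right.
    have Ham : a ^+ m != 0 by rewrite GRing.expf_neq0.
    rewrite Hmul ?GRing.mulf_neq0 // Hmul // nuX //.
    have Hle : Rle (INR n) (INR m) by apply: le_INR; apply/leP.
    have Hk : Rmult (Rdiv (Ropp (Rplus (nu b) (nu c))) (nu a)) (nu a)
              = Ropp (Rplus (nu b) (nu c)) by field; lra.
    have H1 := Rmult_le_compat_r (nu a) _ _ (Rlt_le _ _ Hpa) Hle.
    have H2 := Rmult_lt_compat_r (nu a) _ _ Hpa Hn.
    lra.
- move=> H.
  case: (Rlt_or_le R0 (nu x0)) => Hp.
    have := (proj1 (H x0)) (or_intror Hp). move=> E; by rewrite E eqxx in Hx0.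
  have Hi : x0^-1 != 0 by rewrite GRing.invr_eq0.
  have := Hmul x0 x0^-1 Hx0 Hi. rewrite GRing.mulfV // nu1 => E.
  have Hp' : Rlt R0 (nu x0^-1) by lra.
  have := (proj1 (H x0^-1)) (or_intror Hp'). move=> E'; by rewrite E' eqxx in Hi.
- move=> H. case: (H 1) => [E|]. by have := (GRing.oner_neq0 : (1 : {fraction D}) != 0); rewrite E eqxx.
  rewrite nu1; lra.
Qed.
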